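(* Let $h\ge1$ and $r\ge1$ be natural numbers and let $k_1,\dots,k_r$ be natural numbers with $1\le k_i\le h$. Then there exists a word $A\in\mathsf{W}^N_3$ such that $\mathbf{u}(A)=(K_{h,k_1},\dots,K_{h,k_r})$.
   Context: Words are finite strings over $\mathbb{N}$; $\Lambda$ is the empty word, juxtaposition is concatenation, $A^s$ is $A$ repeated $s$ times. For $k\in\mathbb{N}$, $\mathsf{S}_k$ is the set of words all of whose symbols are $\ge k$; $\mathsf{W}_3$ is the set of words with all symbols $\le3$. Given a linear preorder $\precsim$ with $A\sim B$ iff $A\precsim B\wedge B\precsim A$ and $A\prec B$ iff $A\precsim B\wedge\neg B\precsim A$, a finite sequence $(A_1,\dots,A_p)$ is lexicographically not greater than $(B_1,\dots,B_q)$ iff either $p\le q$ and $A_i\sim B_i$ for all $i\le p$, or there is $s<\min(p,q)$ with $A_i\sim B_i$ for $i\le s$ and $A_{s+1}\prec B_{s+1}$. A lexicographically maximal subsequence of a finite sequence is a subsequence that is lexicographically not less than every subsequence. The linear preorder $\precsim$ on words is defined by recursion on (largest symbol of $AB$) $-$ (smallest symbol of $AB$): $\Lambda\precsim\Lambda$; if $AB$ is nonempty with minimal symbol $n$, write uniquely $A=A_1n\cdots nA_k$, $B=B_1n\cdots nB_l$ ($k,l\ge1$) with $A_i,B_j\in\mathsf{S}_{n+1}$ (possibly empty); let $C,D$ be lexicographically maximal subsequences of $(A_1,\dots,A_k)$, $(B_1,\dots,B_l)$; then $A\precsim B$ iff $C$ is lexicographically not greater than $D$. The set $\mathsf{NF}$: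 $\Lambda\in\mathsf{NF}$; a word with minimal symbol $n$, written $A_1n\cdots nA_k$ with $k\ge2$, $A_i\in\mathsf{S}_{n+1}$, is in $\mathsf{NF}$ iff $A_k\precsim\dots\precsim A_1$ and all $A_i\in\mathsf{NF}$. Every word is equivalent to exactly one word of $\mathsf{NF}$. For $A\in\mathsf{NF}$, $\Diamond_nA$ is the unique word of $\mathsf{NF}$ equivalent to $An$. $\mathsf{W}^N_3=\mathsf{W}_3\cap\mathsf{NF}$. Let $I_s=3^s2$; for $1\le k\le h$ let $K_{h,k}=I_{h-1}I_{h-2}\cdots I_{k+1}I_k3^k$. For $A\in\mathsf{W}^N_3$ written as $A=A_r0A_{r-1}0\cdots0A_1$ with all $A_i\in\mathsf{S}_1\cap\mathsf{W}^N_3$, put $\mathbf{u}(A)=(u_1(A),\dots,u_r(A))$ where $u_i(A)=\Diamond_3(A_r0A_{r-1}0\cdots0A_i)$. *)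

(* Defs.v *)
From mathcomp Require Import all_boot.
Set Implicit Arguments. Unset Strict Implicit. Unset Printing Implicit Defensive.

(* smallest / largest symbol of a word (0 for the empty word, unused) *)
Definition minsym (s : seq nat) : nat := foldr minn (head 0 s) s.
Definition maxsym (s : seq nat) : nat := foldr maxn 0 s.

(* splitw n A = (A_1, ..., A_k) where A = A_1 n A_2 n ... n A_k, the A_i
   not containing n (possibly empty); k = (number of n's in A) + 1. *)
Fixpoint splitw (n : nat) (s : seq nat) : seq (seq nat) :=
  match s with
  | [::] => [:: [::]]
  | x :: s' => let r := splitw n s' in
      if x == n then [::] :: r else (x :: head [::] r) :: behead r
  end.

Fixpoint joinw (n : nat) (ps : seq (seq nat)) : seq nat :=
  match ps with
  | [::] => [::]
  | [:: x] => x
  | x :: ps' => x ++ n :: joinw n ps'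
  end.

Fixpoint subseqs {T : Type} (s : seq T) : seq (seq T) :=
  match s with
  | [::] => [:: [::]]
  | x :: s' => [seq x :: t | t <- subseqs s'] ++ subseqs s'
  end.

Fixpoint lexle {T : Type} (le : T -> T -> bool) (s t : seq T) : bool :=
  match s, t with
  | [::], _ => true
  | _ :: _, [::] => false
  | x :: s', y :: t' =>
      if le x y && le y x then lexle le s' t'
      else le x y && ~~ le y x
  end.

Definition lexmax {T : eqType} (le : T -> T -> bool) (s C : seq T) : bool :=
  (C \in subseqs s) && all (fun D => lexle le D C) (subseqs s).

(* The preorder on words, by recursion with fuel f; the fuel
   (maxsym (A++B) - minsym (A++B)).+1 used in [wle] is always sufficient,
   since the pieces compared at the next level have symbols in
   [n+1, maxsym (A++B)]. *)
Fixpoint wle_f (f : nat) (A B : seq nat) : bool :=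
  if A ++ B is [::] then true else
  match f with
  | 0 => true (* unreachable with sufficient fuel *)
  | f'.+1 =>
      let n := minsym (A ++ B) in
      let As := splitw n A in
      let Bs := splitw n B in
      has (fun C => has (fun D =>
             [&& lexmax (wle_f f') As C, lexmax (wle_f f') Bs D
               & lexle (wle_f f') C D]) (subseqs Bs)) (subseqs As)
  end.

Definition wle (A B : seq nat) : bool :=
  wle_f (maxsym (A ++ B) - minsym (A ++ B)).+1 A B.

Definition wequiv (A B : seq nat) : bool := wle A B && wle B A.

(* NF, by recursion with fuel (pieces are strictly shorter) *)
Fixpoint isNF_f (f : nat) (A : seq nat) : bool :=
  if A is [::] then true else
  match f with
  | 0 => false
  | f'.+1 =>
      let ps := splitw (minsym A) A in
      [&& 2 <= size ps, sorted (fun X Y => wle Y X) ps & all (isNF_f f') ps]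
  end.

Definition isNF (A : seq nat) : bool := isNF_f (size A).+1 A.

Definition inW3N (A : seq nat) : bool := all (fun x => x <= 3) A && isNF A.

(* D = ◇_n A, i.e. D is the (unique) NF word equivalent to A n
   (for A in NF) *)
Definition is_Diamond (n : nat) (A D : seq nat) : Prop :=
  isNF D /\ wequiv D (A ++ [:: n]).

(* I_s = 3^s 2 and K_{h,k} = I_{h-1} I_{h-2} ... I_k 3^k *)
Definition Iw (s : nat) : seq nat := nseq s 3 ++ [:: 2].
Definition Kw (h k : nat) : seq nat :=
  flatten [seq Iw s | s <- rev (iota k (h - k))] ++ nseq k 3.

(* u(A) = us : writing A = A_r 0 ... 0 A_1 (so splitw 0 A = (A_r,...,A_1)),
   us has length r and its i-th entry (0-based, i.e. u_{i+1}(A)) is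
   ◇_3 (A_r 0 ... 0 A_{i+1}). *)
Definition u_is (A : seq nat) (us : seq (seq nat)) : Prop :=
  let ps := splitw 0 A in
  size us = size ps /\
  forall i, i < size ps ->
    is_Diamond 3 (joinw 0 (take (size ps - i) ps)) (nth [::] us i).

(* Main.v *)
Require Import Defs.
From mathcomp Require Import all_boot zify.
Set Implicit Arguments. Unset Strict Implicit. Unset Printing Implicit Defensive.

Lemma mem_body (T : eqType) {x y : T} {s} : y \in s -> y \in x :: s.
Proof. by rewrite inE => ->; rewrite orbT. Qed.
Lemma foldr_minn_le a s y : y \in s -> foldr minn a s <= y.
Proof. elim: s => //= x s IH; rewrite inE => /orP[/eqP->|/IH]; lia. Qed.
Lemma foldr_minn_lea a s : foldr minn a s <= a.
Proof. elim: s => //= x s IH; lia. Qed.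
Lemma foldr_minn_ge b a s : b <= a -> (forall y, y \in s -> b <= y) -> b <= foldr minn a s.
Proof.
move=> ba; elim: s => //= x s IH H.
have := H x (mem_head _ _); have := IH (fun y hy => H y (mem_body hy)); lia.
Qed.
Lemma foldr_minn_mem a s : foldr minn a s \in a :: s.
Proof.
elim: s => [|x s IH] /=; first by rewrite inE.
rewrite /minn; case: ltnP => _; rewrite !inE ?eqxx ?orbT //.
move: IH; rewrite !inE => /orP[->|->] //; by rewrite ?orbT.
Qed.
Lemma minsym_le s y : y \in s -> minsym s <= y.
Proof. rewrite /minsym; exact: foldr_minn_le. Qed.
Lemma minsym_ge s b : s != [::] -> (forall y, y \in s -> b <= y) -> b <= minsym s.
Proof.
case: s => // x s _ H; rewrite /minsym.
apply: (@foldr_minn_ge b x (x :: s)); first exact: H (mem_head _ _).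
by move=> y hy; apply: H.
Qed.
Lemma minsym_mem s : s != [::] -> minsym s \in s.
Proof.
case: s => // x s _; rewrite /minsym /=.
have := foldr_minn_mem x (x :: s); rewrite /= inE => /orP[/eqP->|//].
by rewrite mem_head.
Qed.
Lemma minsym_eq s n : n \in s -> (forall y, y \in s -> n <= y) -> minsym s = n.
Proof.
move=> ns H; apply/eqP; rewrite eqn_leq minsym_le //=.
apply: minsym_ge => //; by case: (s) ns.
Qed.
Lemma maxsym_ge s y : y \in s -> y <= maxsym s.
Proof. rewrite /maxsym; elim: s => //= x s IH; rewrite inE => /orP[/eqP->|/IH]; lia. Qed.
Lemma maxsym_le s b : (forall y, y \in s -> y <= b) -> maxsym s <= b.
Proof.
rewrite /maxsym; elim: s => //= x s IH H.
have := H x (mem_head _ _); have := IH (fun y hy => H y (mem_body hy)); lia.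
Qed.

Lemma splitw_nil n s : splitw n s != [::].
Proof. by case: s => //= x s; case: ifP. Qed.

Lemma splitw_mem n A X x : X \in splitw n A -> x \in X -> (x \in A) && (x != n).
Proof.
elim: A X => [|a A IH] X /=; first by rewrite inE => /eqP->.
case: ifP => an.
- rewrite inE => /orP[/eqP->//|/IH H /H]; by rewrite inE => /andP[-> ->]; rewrite orbT.
- have hr := splitw_nil n A.
  case E: (splitw n A) hr => [|Y r] // _.
  rewrite /= inE => /orP[/eqP->|XY].
  + rewrite inE => /orP[/eqP->|xY]; first by rewrite inE eqxx an.
    have := IH Y; rewrite E mem_head => /(_ isT xY) /andP[xA ->]; by rewrite inE xA orbT.
  + move=> xX; have := IH X; rewrite E inE XY orbT => /(_ isT xX) /andP[xA ->]; by rewrite inE xA orbT.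
Qed.

Lemma splitw_size n A X : X \in splitw n A -> size X + (n \in A) <= size A.
Proof.
elim: A X => [|a A IH] X /=; first by rewrite inE => /eqP->.
rewrite inE; case: ifP => an.
- rewrite (eqP an) eqxx /=. rewrite inE => /orP[/eqP->//|/IH]; case: (n \in A) => /=; lia.
- have hr := splitw_nil n A.
  rewrite eq_sym an /=.
  case E: (splitw n A) hr => [|Y r] // _.
  rewrite /= inE => /orP[/eqP->/=|XY].
  + have := IH Y; rewrite E mem_head => /(_ isT); case: (n \in A) => /=; lia.
  + have := IH X; rewrite E inE XY orbT => /(_ isT); case: (n \in A) => /=; lia.
Qed.

Lemma splitw_notin (n : nat) X : n \notin X -> splitw n X = [:: X].
Proof.
elim: X => //= x X IH; rewrite inE negb_or => /andP[xn /IH->].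
by rewrite eq_sym (negbTE xn).
Qed.

Lemma splitw_cat (n : nat) X rest : n \notin X -> splitw n (X ++ n :: rest) = X :: splitw n rest.
Proof.
elim: X => /= [|x X IH]; first by rewrite eqxx.
rewrite inE negb_or => /andP[xn /IH->]; by rewrite eq_sym (negbTE xn).
Qed.

Lemma splitw_joinw (n : nat) (ps : seq (seq nat)) : ps != [::] -> (forall X, X \in ps -> n \notin X) ->
  splitw n (joinw n ps) = ps.
Proof.
elim: ps => // X ps IH _ H.
case: ps IH H => [|Y ps] IH H /=; first by rewrite splitw_notin // H // mem_head.
rewrite splitw_cat ?H ?mem_head //; congr (_ :: _); apply: IH => // Z hZ.
by apply: H; rewrite inE hZ orbT.
Qed.

Lemma all_joinw (P : pred nat) n ps : P n -> all (all P) ps -> all P (joinw n ps).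
Proof.
move=> Pn; elim: ps => //= X [|Y ps] IH /andP[hX hr] /=; first by [].
by rewrite all_cat hX /= Pn IH.
Qed.

Lemma mem_joinw_sep (n : nat) (X Y : seq nat) ps : n \in joinw n [:: X, Y & ps].
Proof. by rewrite /= mem_cat inE eqxx orbT. Qed.

Lemma joinw_rcons_cat (n : nat) (ps : seq (seq nat)) x y : joinw n (rcons ps x) ++ y = joinw n (rcons ps (x ++ y)).
Proof.
elim: ps => //= a ps IH.
case: ps IH => [|b ps] IH /=; first by rewrite -catA.
by rewrite -catA /= IH.
Qed.

Section Sub.
Variable T : eqType.
Implicit Types s t : seq T.

Lemma subseqs_self s : s \in subseqs s.
Proof. elim: s => [|x s IH] /=; first by rewrite inE. by rewrite mem_cat map_f. Qed.

Lemma subseqs_nil s : [::] \in subseqs s.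
Proof. elim: s => [|x s IH] /=; first by rewrite inE. by rewrite mem_cat IH orbT. Qed.

Lemma subseqs_mem s t : t \in subseqs s -> {subset t <= s}.
Proof.
elim: s t => [|x s IH] t /=; first by rewrite inE => /eqP-> y.
rewrite mem_cat => /orP[/mapP[u hu ->]|/IH H] y.
- rewrite !inE => /orP[->//|/(IH _ hu) ->]; by rewrite orbT.
- by move/H => hy; rewrite inE hy orbT.
Qed.

Lemma subseqs_tail s y t : (y :: t) \in subseqs s -> t \in subseqs s.
Proof.
elim: s => [|x s IH] /=; first by rewrite inE.
rewrite !mem_cat => /orP[/mapP[u hu [_ ->]]|/IH ->]; by rewrite ?hu orbT.
Qed.

Variable le : T -> T -> bool.

Lemma lexle_refl s : {in s, forall x, le x x} -> lexle le s s.
Proof. elim: s => //= x s IH H; rewrite H ?mem_head //= IH // => y hy; apply: H; by rewrite inE hy orbT. Qed.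

Lemma lexle_catl s t u : {in s, forall x, le x x} -> lexle le (s ++ t) (s ++ u) = lexle le t u.
Proof. elim: s => //= x s IH H; rewrite H ?mem_head //= IH // => y hy; apply: H; by rewrite inE hy orbT. Qed.

Lemma lexmax_single x C : lexmax le [:: x] C -> C = [:: x].
Proof.
rewrite /lexmax /= !inE => /andP[/orP[/eqP->//|/eqP->]] //=.
Qed.

Lemma lexmax_sorted s : {in s, forall x, le x x} -> pairwise (fun x y => le y x) s -> lexmax le s s.
Proof.
move=> Hr Hp; rewrite /lexmax subseqs_self /=; apply/allP.
elim: s Hr Hp => [|x s IH] Hr /= Hp D; first by rewrite inE => /eqP->.
move: Hp => /andP[hx hp].
have IH' := IH (fun y hy => Hr y (mem_body hy)) hp.
rewrite mem_cat => /orP[/mapP[t ht ->]|].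
- by rewrite /= Hr ?mem_head //= IH'.
- case: D => // y t hyt.
  have yin : y \in s by apply: (subseqs_mem hyt); rewrite mem_head.
  rewrite /= (allP hx y yin) /=.
  case: (le x y) => //=; apply: IH'; exact: subseqs_tail hyt.
Qed.

Lemma lexmax_last p x : le x x -> (forall y, y \in p -> le y x && ~~ le x y) ->
  lexmax le (rcons p x) [:: x].
Proof.
move=> hx H; rewrite /lexmax; apply/andP; split.
  elim: p H => [|z p IH] H /=; first by rewrite inE eqxx.
  rewrite mem_cat IH ?orbT // => y hy; apply: H; by rewrite inE hy orbT.
apply/allP; elim: p H => [|z p IH] H /= D.
  by rewrite !inE => /orP[/eqP->|/eqP->] //=; rewrite hx.
rewrite mem_cat => /orP[/mapP[t _ ->]|]; last by apply: IH => y hy; apply: H; rewrite inE hy orbT.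
move: (H z (mem_head _ _)) => /andP[hzx hxz] /=; by rewrite hzx (negbTE hxz).
Qed.

Lemma lexle_trans (S : seq T) : (forall x y z, x \in S -> y \in S -> z \in S -> le x y -> le y z -> le x z) ->
  forall s t u, {subset s <= S} -> {subset t <= S} -> {subset u <= S} ->
  lexle le s t -> lexle le t u -> lexle le s u.
Proof.
move=> tr; elim=> [|x s IH] [|y t] [|z u] //= hs ht hu H1 H2.
have xS : x \in S by apply: hs; rewrite mem_head.
have yS : y \in S by apply: ht; rewrite mem_head.
have zS : z \in S by apply: hu; rewrite mem_head.
have E1 : le x y by move: H1; case: (le x y).
have E3 : le y z by move: H2; case: (le y z).
have xz : le x z := tr _ _ _ xS yS zS E1 E3.
rewrite xz /=; case zx: (le z x) => //.
have E2 : le y x := tr _ _ _ yS zS xS E3 zx.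
have E4 : le z y := tr _ _ _ zS xS yS zx E1.
rewrite E1 E2 /= in H1; rewrite E3 E4 /= in H2.
apply: (IH t u) => // w hw; [apply: hs|apply: ht|apply: hu]; by rewrite inE hw orbT.
Qed.

Lemma lexle_congr (S : seq T) (le2 : T -> T -> bool) :
  (forall x y, x \in S -> y \in S -> le x y = le2 x y) ->
  forall s t, {subset s <= S} -> {subset t <= S} -> lexle le s t = lexle le2 s t.
Proof.
move=> E; elim=> [|x s IH] [|y t] //= hs ht.
have xS : x \in S by apply: hs; rewrite mem_head.
have yS : y \in S by apply: ht; rewrite mem_head.
rewrite !E // IH // => w hw; [apply: hs|apply: ht]; by rewrite inE hw orbT.
Qed.

Lemma lexmax_congr (S : seq T) (le2 : T -> T -> bool) :
  (forall x y, x \in S -> y \in S -> le x y = le2 x y) ->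
  forall s C, {subset s <= S} -> lexmax le s C = lexmax le2 s C.
Proof.
move=> E s C hs; rewrite /lexmax; case hC: (C \in subseqs s) => //=.
apply: eq_in_all => D hD; apply: (lexle_congr E).
- by move=> w /(subseqs_mem hD) /hs.
- by move=> w /(subseqs_mem hC) /hs.
Qed.

End Sub.

Definition body (le : seq nat -> seq nat -> bool) n (A B : seq nat) :=
  has (fun C => has (fun D => [&& lexmax le (splitw n A) C, lexmax le (splitw n B) D
     & lexle le C D]) (subseqs (splitw n B))) (subseqs (splitw n A)).

Lemma wle_f_nil f A B : A ++ B = [::] -> wle_f f A B = true.
Proof. by case: f => [|f] /= ->. Qed.

Lemma wle_f_S f A B : A ++ B != [::] ->
  wle_f f.+1 A B = body (wle_f f) (minsym (A ++ B)) A B.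
Proof. move=> H; case E: (A ++ B) H => [//|x s] _; rewrite /= E. by []. Qed.

Lemma body_congr le1 le2 n A B :
  (forall X Y, X \in splitw n A ++ splitw n B -> Y \in splitw n A ++ splitw n B ->
     le1 X Y = le2 X Y) -> body le1 n A B = body le2 n A B.
Proof.
move=> E; rewrite /body; apply: eq_in_has => C hC; apply: eq_in_has => D hD.
have sA : {subset splitw n A <= splitw n A ++ splitw n B} by move=> w hw; rewrite mem_cat hw.
have sB : {subset splitw n B <= splitw n A ++ splitw n B} by move=> w hw; rewrite mem_cat hw orbT.
rewrite (lexmax_congr E (s := splitw n A)) // (lexmax_congr E (s := splitw n B)) //.
rewrite (lexle_congr E) //.
- by move=> w /(subseqs_mem hC) /sA.
- by move=> w /(subseqs_mem hD) /sB.
Qed.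

Lemma pieces_diff A B X Y : A ++ B != [::] ->
  X \in splitw (minsym (A ++ B)) A ++ splitw (minsym (A ++ B)) B ->
  Y \in splitw (minsym (A ++ B)) A ++ splitw (minsym (A ++ B)) B ->
  X ++ Y != [::] ->
  maxsym (X ++ Y) - minsym (X ++ Y) < maxsym (A ++ B) - minsym (A ++ B).
Proof.
set n := minsym (A ++ B) => nAB hX hY nXY.
have memP : forall (Z : seq nat) (z : nat), Z \in splitw n A ++ splitw n B -> z \in Z -> (z \in A ++ B) && (z != n).
  move=> Z z; rewrite mem_cat => /orP[] hZ hz.
  - by have /andP[zA ->] := splitw_mem hZ hz; rewrite mem_cat zA.
  - by have /andP[zB ->] := splitw_mem hZ hz; rewrite mem_cat zB orbT.
have hz : forall z : nat, z \in X ++ Y -> (z \in A ++ B) && (z != n).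
  move=> z; rewrite mem_cat => /orP[]; [exact: memP hX| exact: memP hY].
have h1 : n.+1 <= minsym (X ++ Y).
  apply: minsym_ge => // z /hz /andP[zAB zn].
  have := minsym_le zAB; rewrite -/n; move: zn; lia.
have h2 : maxsym (X ++ Y) <= maxsym (A ++ B).
  by apply: maxsym_le => z /hz /andP[zAB _]; apply: maxsym_ge.
have h3 : minsym (X ++ Y) <= maxsym (X ++ Y).
  apply: maxsym_ge; exact: minsym_mem.
lia.
Qed.

Lemma wle_f_fuel f g A B : maxsym (A ++ B) - minsym (A ++ B) < f ->
  maxsym (A ++ B) - minsym (A ++ B) < g -> wle_f f A B = wle_f g A B.
Proof.
elim: f g A B => [|f IH] [|g] A B hf hg; try lia.
case E: (A ++ B == [::]); first by rewrite !wle_f_nil //; apply/eqP.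
rewrite !wle_f_S ?E //; apply: body_congr => X Y hX hY.
case E2: (X ++ Y == [::]); first by rewrite !wle_f_nil //; apply/eqP.
have := pieces_diff (negbT E) hX hY (negbT E2).
move=> hd; rewrite ltnS in hf hg; apply: IH.
- exact: leq_trans hd hf.
- exact: leq_trans hd hg.
Qed.

Lemma wle_unfold A B : A ++ B != [::] -> wle A B = body wle (minsym (A ++ B)) A B.
Proof.
move=> nAB; rewrite {1}/wle wle_f_S //; apply: body_congr => X Y hX hY.
case E2: (X ++ Y == [::]); first by rewrite /wle !wle_f_nil //; apply/eqP.
have := pieces_diff nAB hX hY (negbT E2).
move=> hd; rewrite /wle; apply: wle_f_fuel; [exact: hd | exact: ltnSn].
Qed.

Lemma wle_nil : wle [::] [::].
Proof. by []. Qed.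

Lemma isNF_f_S f a A : isNF_f f.+1 (a :: A) =
  [&& 2 <= size (splitw (minsym (a :: A)) (a :: A)),
      sorted (fun X Y => wle Y X) (splitw (minsym (a :: A)) (a :: A))
    & all (isNF_f f) (splitw (minsym (a :: A)) (a :: A))].
Proof. by []. Qed.

Lemma isNF_f_fuel f g A : size A < f -> size A < g -> isNF_f f A = isNF_f g A.
Proof.
elim: f g A => [|f IH] [|g] [|a A] // hf hg.
rewrite /= in hf hg; rewrite !isNF_f_S; congr (_ && (_ && _)); apply: eq_in_all => X hX; apply: IH.
- have := splitw_size hX; rewrite minsym_mem //=; move: (size X) => m; lia.
- have := splitw_size hX; rewrite minsym_mem //=; move: (size X) => m; lia.
Qed.

Lemma isNF_unfold a A : isNF (a :: A) =
  [&& 2 <= size (splitw (minsym (a :: A)) (a :: A)),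
      sorted (fun X Y => wle Y X) (splitw (minsym (a :: A)) (a :: A))
    & all isNF (splitw (minsym (a :: A)) (a :: A))].
Proof.
rewrite /isNF isNF_f_S; congr (_ && (_ && _)); apply: eq_in_all => X hX; apply: isNF_f_fuel => //.
have := splitw_size hX; rewrite minsym_mem //=; move: (size X) => m; lia.
Qed.

Lemma isNF_nil : isNF [::].
Proof. by []. Qed.

Lemma lexle_single (le : seq nat -> seq nat -> bool) A B : lexle le [:: A] [:: B] = le A B.
Proof. by rewrite /=; case: (le A B); case: (le B A). Qed.

Lemma step_true A B n C0 D0 : all (leq n) (A ++ B) ->
  lexmax wle (splitw n A) C0 -> lexmax wle (splitw n B) D0 -> lexle wle C0 D0 -> wle A B.
Proof.
move=> hall mC mD hl.
case nin: (n \in A ++ B).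
- have nAB : A ++ B != [::] by case: (A ++ B) nin.
  have mn : minsym (A ++ B) = n by apply: minsym_eq => // y hy; exact: (allP hall).
  rewrite wle_unfold // mn; apply/hasP; exists C0; first by case/andP: mC.
  apply/hasP; exists D0; first by case/andP: mD.
  by rewrite mC mD hl.
- move/negbT: nin; rewrite mem_cat negb_or => /andP[nA nB].
  move: mC mD; rewrite !splitw_notin // => /lexmax_single Ce /lexmax_single De.
  by move: hl; rewrite Ce De lexle_single.
Qed.

Lemma step_false A B n C0 D0 : all (leq n) (A ++ B) ->
  lexmax wle (splitw n A) C0 -> lexmax wle (splitw n B) D0 ->
  (forall x y z, x \in splitw n A ++ splitw n B -> y \in splitw n A ++ splitw n B ->
     z \in splitw n A ++ splitw n B -> wle x y -> wle y z -> wle x z) ->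
  ~~ lexle wle C0 D0 -> ~~ wle A B.
Proof.
move=> hall mC mD tr hl.
case nin: (n \in A ++ B).
- have nAB : A ++ B != [::] by case: (A ++ B) nin.
  have mn : minsym (A ++ B) = n by apply: minsym_eq => // y hy; exact: (allP hall).
  rewrite wle_unfold // mn; apply/negP => /hasP[C hC /hasP[D hD /and3P[mC' mD' hCD]]].
  move: hl => /negP; apply.
  have sA : {subset splitw n A <= splitw n A ++ splitw n B} by move=> w hw; rewrite mem_cat hw.
  have sB : {subset splitw n B <= splitw n A ++ splitw n B} by move=> w hw; rewrite mem_cat hw orbT.
  have C0in : C0 \in subseqs (splitw n A) by case/andP: mC.
  have D0in : D0 \in subseqs (splitw n B) by case/andP: mD.
  have h1 : lexle wle C0 C by case/andP: mC' => _ /allP; apply.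
  have h2 : lexle wle D D0 by case/andP: mD => _ /allP; apply.
  have sC0 : {subset C0 <= splitw n A ++ splitw n B} by move=> w /(subseqs_mem C0in) /sA.
  have sC : {subset C <= splitw n A ++ splitw n B} by move=> w /(subseqs_mem hC) /sA.
  have sD : {subset D <= splitw n A ++ splitw n B} by move=> w /(subseqs_mem hD) /sB.
  have sD0 : {subset D0 <= splitw n A ++ splitw n B} by move=> w /(subseqs_mem D0in) /sB.
  apply: (lexle_trans tr sC0 sD sD0) => //.
  exact: (lexle_trans tr sC0 sC sD).
- move/negbT: nin; rewrite mem_cat negb_or => /andP[nA nB].
  move: mC mD; rewrite !splitw_notin // => /lexmax_single Ce /lexmax_single De.
  by move: hl; rewrite Ce De lexle_single.
Qed.

Lemma step_eq A B n C0 D0 : all (leq n) (A ++ B) ->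
  lexmax wle (splitw n A) C0 -> lexmax wle (splitw n B) D0 ->
  (forall x y z, x \in splitw n A ++ splitw n B -> y \in splitw n A ++ splitw n B ->
     z \in splitw n A ++ splitw n B -> wle x y -> wle y z -> wle x z) ->
  wle A B = lexle wle C0 D0.
Proof.
move=> hall mC mD tr; case E: (lexle wle C0 D0).
- exact: step_true hall mC mD E.
- apply/negbTE; apply: step_false mC mD tr _ => //; by rewrite E.
Qed.

Lemma pairwise_all_in (T : eqType) (r : rel T) (s : seq T) :
  {in s &, forall x y, r x y} -> pairwise r s.
Proof.
elim: s => //= x s IH H; rewrite IH ?andbT.
- apply/allP => y hy; apply: H; by rewrite inE ?eqxx ?hy ?orbT.
- move=> a b ha hb; apply: H; by rewrite inE ?ha ?hb orbT.
Qed.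

Lemma lexle_map (A B : Type) (f : A -> B) (le : B -> B -> bool) (le' : A -> A -> bool) :
  (forall x y, le (f x) (f y) = le' x y) ->
  forall s t, lexle le (map f s) (map f t) = lexle le' s t.
Proof. move=> E; elim=> [|x s IH] [|y t] //=; by rewrite !E IH. Qed.

Lemma lexle_leq_trans s t u : lexle leq s t -> lexle leq t u -> lexle leq s u.
Proof.
apply: (lexle_trans (S := s ++ t ++ u)).
- move=> x y z _ _ _; exact: leq_trans.
- by move=> w hw; rewrite !mem_cat hw.
- by move=> w hw; rewrite !mem_cat hw orbT.
- by move=> w hw; rewrite !mem_cat hw !orbT.
Qed.

Lemma lexle_leq_refl s : lexle leq s s.
Proof. apply: lexle_refl => x _; exact: leqnn. Qed.

Definition T3 a : seq nat := nseq a 3.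

Lemma splitw_T3 a : splitw 3 (T3 a) = nseq a.+1 [::].
Proof. rewrite /T3; elim: a => // a IH. by rewrite /= IH. Qed.

Lemma lexle_nseq_nil m m' : lexle wle (nseq m [::]) (nseq m' [::]) = (m <= m').
Proof. elim: m m' => [|m IH] [|m'] //=; by rewrite IH. Qed.

Lemma L3 a b : wle (T3 a) (T3 b) = (a <= b).
Proof.
rewrite (@step_eq _ _ 3 (nseq a.+1 [::]) (nseq b.+1 [::])).
- by rewrite lexle_nseq_nil.
- by rewrite all_cat /T3 !all_nseq /= !orbT.
- rewrite splitw_T3; apply: lexmax_sorted.
  + by move=> x; rewrite mem_nseq => /andP[_ /eqP->].
  + by apply: pairwise_all_in => x y; rewrite !mem_nseq => /andP[_ /eqP->] /andP[_ /eqP->].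
- rewrite splitw_T3; apply: lexmax_sorted.
  + by move=> x; rewrite mem_nseq => /andP[_ /eqP->].
  + by apply: pairwise_all_in => x y; rewrite !mem_nseq => /andP[_ /eqP->] /andP[_ /eqP->].
- rewrite !splitw_T3 => x y z; rewrite !mem_cat !mem_nseq.
  by do 3 case/orP=> /andP[_ /eqP->].
Qed.

Lemma NF_T3 a : isNF (T3 a).
Proof.
case: a => // a; rewrite /T3 /= isNF_unfold.
have -> : minsym (3 :: nseq a 3) = 3.
  apply: minsym_eq; first by rewrite mem_head.
  by move=> y; rewrite inE mem_nseq => /orP[/eqP->|/andP[_ /eqP->]].
rewrite (splitw_T3 a.+1).
rewrite /= ?size_nseq /=; apply/andP; split.
- apply: (pairwise_sorted (s := [::] :: nseq a [::])); apply: pairwise_all_in => x y.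
  by rewrite !inE !mem_nseq => /orP[/eqP->|/andP[_ /eqP->]] /orP[/eqP->|/andP[_ /eqP->]].
- by rewrite all_nseq isNF_nil orbT.
Qed.

Definition geq_rel : rel nat := fun x y => y <= x.
Definition P2 (s : seq nat) : seq nat := joinw 2 (map T3 s).
Definition Good (s : seq nat) := (s != [::]) && pairwise geq_rel s.

Lemma symT3 a : all (leq 2) (T3 a).
Proof. by rewrite /T3 all_nseq orbT. Qed.

Lemma symP2 s : all (leq 2) (P2 s).
Proof. apply: all_joinw => //; rewrite all_map; apply/allP => a _; exact: symT3. Qed.

Lemma symP2_3 s : all (fun x => x <= 3) (P2 s).
Proof. apply: all_joinw => //; rewrite all_map; apply/allP => a _ /=; by rewrite /T3 all_nseq orbT. Qed.

Lemma splitw_P2 s : s != [::] -> splitw 2 (P2 s) = map T3 s.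
Proof.
move=> ns; apply: splitw_joinw; first by case: s ns.
by move=> X /mapP[a _ ->]; rewrite /T3 mem_nseq andbF.
Qed.

Lemma pairwise_T3 s : pairwise geq_rel s -> pairwise (fun x y => wle y x) (map T3 s).
Proof.
rewrite pairwise_map; apply: sub_pairwise => x y /=; by rewrite L3.
Qed.

Lemma lexmax_P2 s : Good s -> lexmax wle (splitw 2 (P2 s)) (map T3 s).
Proof.
case/andP=> ns ps; rewrite splitw_P2 //; apply: lexmax_sorted.
- by move=> x /mapP[a _ ->]; rewrite L3.
- exact: pairwise_T3.
Qed.

Lemma L2 s t : Good s -> Good t -> wle (P2 s) (P2 t) = lexle leq s t.
Proof.
move=> gs gt; rewrite (@step_eq _ _ 2 (map T3 s) (map T3 t)).
- by apply: lexle_map => x y; rewrite L3.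
- by rewrite all_cat !symP2.
- exact: lexmax_P2.
- exact: lexmax_P2.
- case/andP: gs => ns _; case/andP: gt => nt _.
  rewrite !splitw_P2 // -map_cat => x y z /mapP[a _ ->] /mapP[b _ ->] /mapP[c _ ->].
  rewrite !L3; exact: leq_trans.
Qed.

Lemma NF_P2 s : Good s -> isNF (P2 s).
Proof.
move=> gs; have /andP[ns ps] := gs.
case: s ns ps gs => // a [|b s] _ ps gs; first exact: NF_T3.
case E: (P2 [:: a, b & s]) => [//|c C]; rewrite isNF_unfold -E.
have -> : minsym (P2 [:: a, b & s]) = 2.
  apply: minsym_eq; first exact: mem_joinw_sep.
  by move=> y hy; exact: (allP (symP2 [:: a, b & s]) y hy).
rewrite splitw_P2 // size_map; apply/and3P; split => //.
- apply: pairwise_sorted; exact: (pairwise_T3 ps).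
- apply/allP => X /mapP[x _ ->]; exact: NF_T3.
Qed.

Lemma P2_refl s : Good s -> wle (P2 s) (P2 s).
Proof. move=> g; rewrite L2 //; exact: lexle_leq_refl. Qed.

Lemma transP2 (S : seq (seq nat)) : all Good S ->
  forall x y z, x \in map P2 S -> y \in map P2 S -> z \in map P2 S -> wle x y -> wle y z -> wle x z.
Proof.
move=> gS x y z /mapP[a ha ->] /mapP[b hb ->] /mapP[c hc ->].
have ga := allP gS a ha; have gb := allP gS b hb; have gc := allP gS c hc.
rewrite !L2 //; exact: lexle_leq_trans.
Qed.

Definition dn m c : seq nat := rev (iota c m).

Lemma dn_cat m m' c : dn (m + m') c = dn m' (c + m) ++ dn m c.
Proof. by rewrite /dn iotaD rev_cat. Qed.

Lemma dn_S m c : dn m.+1 c = (c + m) :: dn m c.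
Proof. by rewrite -addn1 dn_cat. Qed.

Lemma mem_dn m c y : y \in dn m c -> c <= y < c + m.
Proof. by rewrite /dn mem_rev mem_iota. Qed.

Lemma pairwise_dn m c : pairwise geq_rel (dn m c).
Proof.
elim: m => [|m IH] //; rewrite dn_S /= IH andbT.
apply/allP => y /mem_dn /andP[_ h]; rewrite /geq_rel; exact: ltnW.
Qed.

Lemma Good_rcons m c x : x <= c -> Good (rcons (dn m c) x).
Proof.
move=> xc; rewrite /Good; apply/andP; split; first by case: (dn m c).
rewrite pairwise_rcons pairwise_dn andbT; apply/allP => y /mem_dn /andP[h _].
rewrite /geq_rel; exact: leq_trans xc h.
Qed.

Definition Q1 (ws : seq (seq nat)) : seq nat := joinw 1 (map P2 ws).

Lemma symQ1 ws : all (leq 1) (Q1 ws).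
Proof.
apply: all_joinw => //; rewrite all_map; apply/allP => w _ /=.
apply/allP => x hx; have := allP (symP2 w) x hx; exact: leq_trans.
Qed.

Lemma symQ1_3 ws : all (fun x => x <= 3) (Q1 ws).
Proof. apply: all_joinw => //; rewrite all_map; apply/allP => w _ /=; exact: symP2_3. Qed.

Lemma splitw_Q1 ws : ws != [::] -> splitw 1 (Q1 ws) = map P2 ws.
Proof.
move=> ns; apply: splitw_joinw; first by case: ws ns.
move=> X /mapP[w _ ->]; apply/negP => h; have := allP (symP2 w) 1 h; by [].
Qed.

Lemma T3S a : T3 a ++ [:: 3] = T3 a.+1.
Proof. rewrite /T3; by elim: a => //= a ->. Qed.

Lemma P2_cat3 d c : P2 (rcons d c) ++ [:: 3] = P2 (rcons d c.+1).
Proof. by rewrite /P2 !map_rcons joinw_rcons_cat T3S. Qed.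

Lemma joinw_T3_Iw (d : seq nat) a : joinw 2 (rcons (map T3 d) (T3 a)) = flatten (map Iw d) ++ T3 a.
Proof.
elim: d => [|x d IH] //.
have E : forall (s : seq (seq nat)) z, joinw 2 (T3 x :: rcons s z) = T3 x ++ 2 :: joinw 2 (rcons s z)
  by case.
rewrite map_cons rcons_cons E IH /= /Iw -!catA //.
Qed.

Lemma pairwise_rcons_nseq (T : Type) (r : T -> T -> bool) i x y :
  r x x -> r x y -> pairwise r (rcons (nseq i x) y).
Proof.
move=> rxx rxy; elim: i => //= i ->; rewrite andbT all_rcons rxy /= all_nseq rxx orbT //.
Qed.

Lemma lexle_rcons_nseq (T : Type) (le : T -> T -> bool) i x y y' :
  le x x -> le y x -> lexle le (rcons (nseq i x) y) (rcons (nseq i.+1 x) y').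
Proof.
move=> hxx hyx; elim: i => [|i IH] /=.
- by rewrite hyx; case: (le x y).
- by rewrite hxx.
Qed.

Section Level1.
Variable h : nat.
Hypothesis h1 : 1 <= h.

Definition Ln k := rcons (dn (h - k) k) k.-1.
Definition Kn k := rcons (dn (h - k) k) k.
Definition L1n := Ln 1.
Definition Wn i k := rcons (nseq i L1n) (Ln k).
Definition W3n i k := rcons (nseq i L1n) (Kn k).

Lemma Good_Ln k : Good (Ln k).
Proof. apply: Good_rcons; exact: leq_pred. Qed.
Lemma Good_Kn k : Good (Kn k).
Proof. exact: Good_rcons. Qed.
Lemma Good_L1n : Good L1n.
Proof. exact: Good_Ln. Qed.

Lemma dn_rcons0 m : rcons (dn m 1) 0 = m :: dn m 0.
Proof.
have E := dn_cat 1 m 0; rewrite add1n add0n in E.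
by rewrite -cats1 -[X in _ ++ X]/(dn 1 0) -E dn_S.
Qed.

Lemma L1n_split k : 1 <= k <= h -> L1n = dn (h - k) k ++ (k.-1 :: dn k.-1 0).
Proof.
case/andP=> k1 kh; rewrite /L1n /Ln /=.
have -> : h - 1 = (k.-1) + (h - k) by lia.
by rewrite dn_cat rcons_cat add1n prednK // dn_rcons0.
Qed.

Lemma F1 k : 1 <= k <= h -> lexle leq (Ln k) L1n.
Proof.
move=> hk; rewrite (L1n_split hk) /Ln -cats1 lexle_catl; last by move=> x _; exact: leqnn.
by rewrite /= leqnn.
Qed.

Lemma F3a k : 1 <= k <= h -> lexle leq (Kn k) L1n = false.
Proof.
move=> hk; rewrite (L1n_split hk) /Kn -cats1 lexle_catl; last by move=> x _; exact: leqnn.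
case/andP: hk => k1 _; rewrite /=.
have -> : (k <= k.-1) = false by lia.
by [].
Qed.

Lemma F3b k : 1 <= k <= h -> lexle leq L1n (Kn k).
Proof.
move=> hk; rewrite (L1n_split hk) /Kn -cats1 lexle_catl; last by move=> x _; exact: leqnn.
case/andP: hk => k1 _; rewrite /=.
have -> : (k <= k.-1) = false by lia.
by rewrite leq_pred.
Qed.

Lemma Kw_eq k : Kw h k = Q1 [:: Kn k].
Proof. by rewrite /Q1 /= /P2 /Kn map_rcons joinw_T3_Iw /Kw. Qed.

Lemma Ln_cat3 k : 1 <= k -> P2 (Ln k) ++ [:: 3] = P2 (Kn k).
Proof. by move=> k1; rewrite /Ln P2_cat3 prednK. Qed.

Lemma Q1_cat3 i k : 1 <= k -> Q1 (Wn i k) ++ [:: 3] = Q1 (W3n i k).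
Proof. by move=> k1; rewrite /Q1 /Wn /W3n !map_rcons joinw_rcons_cat Ln_cat3. Qed.

Lemma all_Good_W3n i k : all Good (W3n i k).
Proof. by rewrite /W3n all_rcons Good_Kn all_nseq Good_L1n orbT. Qed.
Lemma all_Good_Wn i k : all Good (Wn i k).
Proof. by rewrite /Wn all_rcons Good_Ln all_nseq Good_L1n orbT. Qed.

Lemma M1 i k : 1 <= k <= h -> lexmax wle (map P2 (W3n i k)) [:: P2 (Kn k)].
Proof.
move=> hk; rewrite /W3n map_rcons map_nseq; apply: lexmax_last; first exact: P2_refl (Good_Kn k).
move=> y; rewrite mem_nseq => /andP[_ /eqP->].
by rewrite !L2 ?Good_Kn ?Good_L1n // F3a // F3b.
Qed.

Lemma pairwise_Wn i k : 1 <= k <= h -> pairwise (fun x y => wle y x) (map P2 (Wn i k)).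
Proof.
move=> hk; rewrite /Wn map_rcons map_nseq; apply: pairwise_rcons_nseq.
- exact: P2_refl Good_L1n.
- rewrite L2 ?Good_Ln ?Good_L1n //; exact: F1.
Qed.

Lemma M2 i k : 1 <= k <= h -> lexmax wle (map P2 (Wn i k)) (map P2 (Wn i k)).
Proof.
move=> hk; apply: lexmax_sorted; last exact: pairwise_Wn.
move=> x /mapP[w hw ->]; apply: P2_refl; exact: (allP (all_Good_Wn i k)).
Qed.

Lemma M3 k : lexmax wle [:: P2 (Kn k)] [:: P2 (Kn k)].
Proof.
apply: lexmax_sorted => //; move=> x; rewrite inE => /eqP->; exact: P2_refl (Good_Kn k).
Qed.

Lemma allQ1 ws ws' : all (leq 1) (Q1 ws ++ Q1 ws').
Proof. by rewrite all_cat !symQ1. Qed.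

Lemma rcons_nil (T : eqType) (s : seq T) x : rcons s x != [::].
Proof. by case: s. Qed.

Lemma G1a i k : 1 <= k <= h -> wle (Q1 (W3n i k)) (Q1 [:: Kn k]).
Proof.
move=> hk; apply: (@step_true _ _ 1 [:: P2 (Kn k)] [:: P2 (Kn k)]).
- exact: allQ1.
- rewrite splitw_Q1 ?rcons_nil //; exact: M1.
- rewrite splitw_Q1 //; exact: M3.
- rewrite lexle_single; exact: P2_refl (Good_Kn k).
Qed.

Lemma G1b i k : 1 <= k <= h -> wle (Q1 [:: Kn k]) (Q1 (W3n i k)).
Proof.
move=> hk; apply: (@step_true _ _ 1 [:: P2 (Kn k)] [:: P2 (Kn k)]).
- exact: allQ1.
- rewrite splitw_Q1 //; exact: M3.
- rewrite splitw_Q1 ?rcons_nil //; exact: M1.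
- rewrite lexle_single; exact: P2_refl (Good_Kn k).
Qed.

Lemma G5 i k : 1 <= k <= h -> wle (Q1 (W3n i k)) (Q1 (W3n i k)).
Proof.
move=> hk; apply: (@step_true _ _ 1 [:: P2 (Kn k)] [:: P2 (Kn k)]).
- exact: allQ1.
- rewrite splitw_Q1 ?rcons_nil //; exact: M1.
- rewrite splitw_Q1 ?rcons_nil //; exact: M1.
- rewrite lexle_single; exact: P2_refl (Good_Kn k).
Qed.

Lemma G2 i j k k' : 1 <= k <= h -> 1 <= k' <= h ->
  wle (Q1 (Wn j.+1 k')) (Q1 (W3n i k)).
Proof.
move=> hk hk'; apply: (@step_true _ _ 1 (map P2 (Wn j.+1 k')) [:: P2 (Kn k)]).
- exact: allQ1.
- rewrite splitw_Q1 ?rcons_nil //; exact: M2.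
- rewrite splitw_Q1 ?rcons_nil //; exact: M1.
- rewrite /Wn /= !L2 ?Good_Kn ?Good_L1n // F3a // F3b //.
Qed.

Lemma G3 i j k k' : 1 <= k <= h -> 1 <= k' <= h ->
  ~~ wle (Q1 (W3n i k)) (Q1 (Wn j.+1 k')).
Proof.
move=> hk hk'; apply: (@step_false _ _ 1 [:: P2 (Kn k)] (map P2 (Wn j.+1 k'))).
- exact: allQ1.
- rewrite splitw_Q1 ?rcons_nil //; exact: M1.
- rewrite splitw_Q1 ?rcons_nil //; exact: M2.
- rewrite !splitw_Q1 ?rcons_nil // -map_cat; apply: transP2.
  by rewrite all_cat all_Good_W3n all_Good_Wn.
- rewrite /Wn /= !L2 ?Good_Kn ?Good_L1n // F3a // F3b //.
Qed.

Lemma G4 i k k' : 1 <= k <= h -> 1 <= k' <= h ->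
  wle (Q1 (Wn i k)) (Q1 (Wn i.+1 k')).
Proof.
move=> hk hk'; apply: (@step_true _ _ 1 (map P2 (Wn i k)) (map P2 (Wn i.+1 k'))).
- exact: allQ1.
- rewrite splitw_Q1 ?rcons_nil //; exact: M2.
- rewrite splitw_Q1 ?rcons_nil //; exact: M2.
- rewrite /Wn !map_rcons !map_nseq; apply: lexle_rcons_nseq.
  + exact: P2_refl Good_L1n.
  + rewrite L2 ?Good_Ln ?Good_L1n //; exact: F1.
Qed.

Lemma NF_Q1 i k : 1 <= k <= h -> isNF (Q1 (Wn i k)).
Proof.
move=> hk; case: i => [|i].
  rewrite /Q1 /Wn /=; exact: NF_P2 (Good_Ln k).
case E: (Q1 (Wn i.+1 k)) => [//|c C]; rewrite isNF_unfold -E.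
have -> : minsym (Q1 (Wn i.+1 k)) = 1.
  apply: minsym_eq.
  - rewrite /Q1 /Wn map_rcons map_nseq /=.
    by case: (nseq i (P2 L1n)) => [|? ?]; rewrite /= mem_cat inE eqxx orbT.
  - move=> y hy; exact: (allP (symQ1 (Wn i.+1 k)) y hy).
rewrite splitw_Q1 ?rcons_nil // size_map; apply/and3P; split.
- by rewrite /Wn size_rcons size_nseq.
- apply: pairwise_sorted; exact: pairwise_Wn.
- apply/allP => X /mapP[w hw ->]; exact: (NF_P2 (allP (all_Good_Wn i.+1 k) w hw)).
Qed.

Lemma NF_K k : isNF (Q1 [:: Kn k]).
Proof. rewrite /Q1 /=; exact: NF_P2 (Good_Kn k). Qed.

End Level1.

Lemma notin0_Q1 ws : 0 \notin Q1 ws.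
Proof. apply/negP => h0; have := allP (symQ1 ws) 0 h0; by []. Qed.

Lemma L0 h i k (R : seq (seq nat)) : 1 <= h -> 1 <= k <= h ->
  (forall y, y \in R -> exists j k', y = Q1 (Wn h j.+1 k') /\ 1 <= k' <= h) ->
  wle (Q1 [:: Kn h k]) (joinw 0 (rcons R (Q1 (W3n h i k)))) &&
  wle (joinw 0 (rcons R (Q1 (W3n h i k)))) (Q1 [:: Kn h k]).
Proof.
move=> h1 hk HR.
have all0 : forall s : seq nat, all (leq 0) s by move=> s; apply/allP => x _; exact: leq0n.
have sK : splitw 0 (Q1 [:: Kn h k]) = [:: Q1 [:: Kn h k]] by apply: splitw_notin; exact: notin0_Q1.
have sX : splitw 0 (joinw 0 (rcons R (Q1 (W3n h i k)))) = rcons R (Q1 (W3n h i k)).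
  apply: splitw_joinw; first exact: rcons_nil.
  move=> Z; rewrite mem_rcons inE => /orP[/eqP->|/HR [j [k' [-> _]]]]; exact: notin0_Q1.
have mK : lexmax wle [:: Q1 [:: Kn h k]] [:: Q1 [:: Kn h k]].
  apply: lexmax_sorted => // x; rewrite inE => /eqP->; exact: P2_refl (Good_Kn h k).
have mX : lexmax wle (rcons R (Q1 (W3n h i k))) [:: Q1 (W3n h i k)].
  apply: lexmax_last; first exact: (G5 h1 i hk).
  move=> y /HR [j [k' [-> hk']]]; rewrite (G2 h1 i j hk hk') /=; exact: (G3 h1 i j hk hk').
apply/andP; split.
- apply: (@step_true _ _ 0 [:: Q1 [:: Kn h k]] [:: Q1 (W3n h i k)]) => //.
  + by rewrite sK.
  + by rewrite sX.
  + rewrite lexle_single; exact: (G1b h1 i hk).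
- apply: (@step_true _ _ 0 [:: Q1 (W3n h i k)] [:: Q1 [:: Kn h k]]) => //.
  + by rewrite sX.
  + by rewrite sK.
  + rewrite lexle_single; exact: (G1a h1 i hk).
Qed.

Lemma sorted_map_iota (T : Type) (R : rel T) (f : nat -> T) m n :
  (forall j, R (f j) (f j.+1)) -> sorted R (map f (iota m n)).
Proof.
move=> H; case: n => // n /=.
elim: n m => //= n IH m; rewrite H /=; exact: IH.
Qed.

Lemma mem_joinw2 (n : nat) ps : 2 <= size ps -> n \in joinw n ps.
Proof. case: ps => [|x [|y ps]] // _; exact: mem_joinw_sep. Qed.

Theorem lemma7 (h r : nat) (ks : seq nat) :
  1 <= h -> 1 <= r -> size ks = r -> all (fun k => 1 <= k <= h) ks ->
  exists A : seq nat, inW3N A /\ u_is A [seq Kw h k | k <- ks].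
Proof.
move=> h1 r1 sks aks.
pose kf j := nth 1 ks j.
have hk : forall j, 1 <= kf j <= h.
  move=> j; rewrite /kf; case: (ltnP j (size ks)) => hj.
  - exact: (allP aks) (mem_nth 1 hj).
  - by rewrite nth_default // leqnn h1.
pose W j := Q1 (Wn h j (kf j)).
have NFW : forall j, isNF (W j) by move=> j; exact: (NF_Q1 h1 j (hk j)).
have nW : forall j, 0 \notin W j by move=> j; exact: notin0_Q1.
pose ps := rev (map W (iota 0 r)).
have sps : splitw 0 (joinw 0 ps) = ps.
  apply: splitw_joinw; first by rewrite /ps -size_eq0 size_rev size_map size_iota -lt0n.
  by move=> X; rewrite mem_rev => /mapP[j _ ->].
exists (joinw 0 ps); split.
- rewrite /inW3N; apply/andP; split.
  + apply: all_joinw => //; rewrite all_rev all_map; apply/allP => j _; exact: symQ1_3.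
  + have [r_1|r2] : r = 1 \/ 2 <= r by lia.
      rewrite /ps r_1 /=; exact: (NFW 0).
    have sz : size ps = r by rewrite /ps size_rev size_map size_iota.
    case E: (joinw 0 ps) => [|c C]; first by [].
    rewrite isNF_unfold -E.
    have -> : minsym (joinw 0 ps) = 0.
      apply: minsym_eq => //; first (apply: mem_joinw2; by rewrite sz).
    rewrite sps; apply/and3P; split.
    * by rewrite sz.
    * rewrite /ps rev_sorted; apply: sorted_map_iota => j; exact: (G4 h1 j (hk j) (hk j.+1)).
    * rewrite /ps all_rev all_map; apply/allP => j _; exact: NFW.
- rewrite /u_is sps; split; first by rewrite size_map size_rev size_map size_iota sks.
  move=> i; rewrite size_rev size_map size_iota => ir.
  rewrite /ps take_rev size_map size_iota.
  have -> : r - (r - i) = i by lia.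
  rewrite -map_drop drop_iota add0n.
  have -> : r - i = (r - i).-1.+1 by lia.
  rewrite /= rev_cons (nth_map 1) ?sks // Kw_eq.
  split; first exact: NF_K.
  rewrite /wequiv joinw_rcons_cat /W Q1_cat3; last by case/andP: (hk i).
  apply: L0 => //.
  move=> y; rewrite mem_rev => /mapP[j hj ->].
  move: hj; rewrite mem_iota => /andP[hj _].
  exists j.-1, (kf j); split; last exact: hk.
  by rewrite /W prednK //; apply: leq_trans hj.
Qed.
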